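(* Let $\mathbb{F}$ be a free group on a finite basis $X$, $\pi:\mathbb{F}\twoheadrightarrow\Gamma$ an epimorphism, and suppose $\Gamma$ is stable with respect to $\pi$ and $\ker\pi$ is nontrivial. Then there exist $C_1,C_2>0$ such that for all $x\ge C_1$: (i) if $\delta>0$ is such that there exists a finite $E\subseteq\ker\pi$ for which every $(\delta,E)$-almost-solution is $x^{-1}$-close to a solution for $\ker\pi$, then $\delta\le C_2x^{-1}$; (ii) $F_\Gamma^\pi(x)\ge x/4$.
   Context: For a finite set $\Omega$, $d_\Omega(\sigma,\tau)=|\{\omega:\sigma(\omega)\ne\tau(\omega)\}|/|\Omega|$. For $E\subseteq\mathbb{F}$, a homomorphism $\phi:\mathbb{F}\to\mathrm{Sym}(\Omega)$ ($\Omega$ finite) is a solution for $E$ if $E\subseteq\ker\phi$, and a $(\delta,E)$-almost-solution if $d_\Omega(\phi(r),\mathrm{id}_\Omega)<\delta$ for all $r\in E$. Homomorphisms $\rho,\phi:\mathbb{F}\to\mathrm{Sym}(\Omega)$ are $\epsilon$-close if $d_\Omega(\rho(x),\phi(x))<\epsilon$ for all $x\in X$. $\Gamma$ is stable w.r.t. $\pi$ if for every $\epsilon>0$ there exist $\delta\in(0,1]$ and finite $E\subseteq\ker\pi$ (a valid pair for $\epsilon$) such that every $(\delta,E)$-almost-solution is $\epsilon$-close to a solution for $\ker\pi$. With $\|E\|=\sum_{r\in E}|r|$ (word length in $X$), $F_\Gamma^\pi(x)=\inf\{\|E\|/\delta\}$ over valid pairs for $\epsilon=1/x$. *)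

(* Defs.v *)
From HB Require Import structures.
From mathcomp Require Import all_boot all_order all_algebra all_fingroup.
From mathcomp Require Import all_classical all_reals ereal.
Set Implicit Arguments. Unset Strict Implicit. Unset Printing Implicit Defensive.
Import Order.TTheory GRing.Theory Num.Theory.

(* A letter is a basis element together with an exponent flag:
   (i, false) = x_i,  (i, true) = x_i^{-1}. *)
Definition letter (k : nat) := ('I_k * bool)%type.
Definition word (k : nat) := seq (letter k).

Definition linv k (l : letter k) : letter k := (l.1, ~~ l.2).

Fixpoint reduce k (w : word k) : word k :=
  match w with
  | [::] => [::]
  | l :: w' =>
      match reduce w' with
      | [::] => [:: l]
      | l' :: w'' => if l' == linv l then w'' else l :: l' :: w''
      end
  end.

(* elements of F are the reduced words *)
Definition reduced k (w : word k) : bool := reduce w == w.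

Definition fmul k (u v : word k) : word k := reduce (u ++ v).

Definition wlen k (w : word k) : nat := size w.

Record Grp := {
  gcar :> Type;
  gmul : gcar -> gcar -> gcar;
  gone : gcar;
  ginv : gcar -> gcar;
  gmulA : forall a b c, gmul a (gmul b c) = gmul (gmul a b) c;
  gmul1 : forall a, gmul gone a = a;
  gmulV : forall a, gmul (ginv a) a = gone }.

(* pi : F ->> Gamma is an epimorphism (only its values on reduced words matter) *)
Definition epimorphism k (G : Grp) (pi : word k -> G) : Prop :=
  (forall u v, reduced u -> reduced v -> pi (fmul u v) = gmul (pi u) (pi v)) /\
  (forall g : G, exists2 w, reduced w & pi w = g).

Definition inker k (G : Grp) (pi : word k -> G) (w : word k) : Prop :=
  reduced w /\ pi w = gone G.

(* By the universal property of F, a homomorphism F -> Sym(Omega) is the same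
   as an assignment s : X -> Sym(Omega); hom s w is its value on w. *)
Definition lperm k (O : finType) (s : 'I_k -> {perm O}) (l : letter k) : {perm O} :=
  if l.2 then (s l.1)^-1%g else s l.1.

Definition hom k (O : finType) (s : 'I_k -> {perm O}) (w : word k) : {perm O} :=
  foldr (fun l acc => (lperm s l * acc)%g) 1%g w.

Section Metric.
Variable R : realType.
Local Open Scope ring_scope.

Definition dist (O : finType) (a b : {perm O}) : R :=
  #|[set o | a o != b o]|%:R / #|O|%:R.

Definition is_solution k (G : Grp) (pi : word k -> G) (O : finType)
  (s : 'I_k -> {perm O}) : Prop :=
  forall r, inker pi r -> hom s r = 1%g.

Definition almost_solution k (O : finType) (delta : R) (E : seq (word k))
  (s : 'I_k -> {perm O}) : Prop :=
  forall r, r \in E -> dist (hom s r) 1%g < delta.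

Definition eps_close k (O : finType) (eps : R) (s t : 'I_k -> {perm O}) : Prop :=
  forall i : 'I_k, dist (s i) (t i) < eps.

Definition good_pair k (G : Grp) (pi : word k -> G) (eps delta : R)
  (E : seq (word k)) : Prop :=
  uniq E /\ (forall r, r \in E -> inker pi r) /\
  forall (O : finType) (s : 'I_k -> {perm O}),
    almost_solution delta E s ->
    exists t : 'I_k -> {perm O}, is_solution pi t /\ eps_close eps s t.

Definition valid_pair k (G : Grp) (pi : word k -> G) (eps delta : R)
  (E : seq (word k)) : Prop :=
  0 < delta <= 1 /\ good_pair pi eps delta E.

Definition stable k (G : Grp) (pi : word k -> G) : Prop :=
  forall eps : R, 0 < eps -> exists delta E, valid_pair pi eps delta E.

Definition normE k (E : seq (word k)) : nat := \sum_(r <- E) wlen r.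

(* F_Gamma^pi(x) = inf { ||E|| / delta : (delta, E) valid pair for eps = 1/x } *)
Definition stab_fun k (G : Grp) (pi : word k -> G) (x : R) : \bar R :=
  ereal_inf [set y : \bar R | exists (delta : R) (E : seq (word k)),
     valid_pair pi x^-1 delta E /\ y = ((normE E)%:R / delta)%:E]%classic.
End Metric.

(* Main.v *)
Require Import Defs.
From mathcomp Require Import all_boot all_order all_algebra all_fingroup.
From mathcomp Require Import all_classical all_reals ereal.
From mathcomp Require Import zify ring lra.
Import Order.TTheory GRing.Theory Num.Theory.
Set Implicit Arguments. Unset Strict Implicit. Unset Printing Implicit Defensive.

Lemma reduce_size k (u : word k) : size (reduce u) <= size u.
Proof.
elim: u => [|l u IH] //=.
case: (reduce u) IH => [|l' u''] /= IH; first by [].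
case: ifP => _ /=; lia.
Qed.

Lemma red_tail k (l : letter k) u : reduce (l :: u) = l :: u -> reduce u = u.
Proof.
move=> /=; have := reduce_size u.
case E: (reduce u) => [|l' u''] /= Hs.
  by case=> <-.
case: ifP => _.
  move=> Hu; have := f_equal size Hu => /=; lia.
by case=> ->.
Qed.

Lemma red_adj k (l l' : letter k) u :
  reduce [:: l, l' & u] = [:: l, l' & u] -> l' != linv l.
Proof.
move=> H; have H1 := red_tail H.
have E : reduce [:: l, l' & u] =
  (match reduce (l' :: u) with
   | [::] => [:: l]
   | l'' :: w'' => if l'' == linv l then w'' else l :: l'' :: w''
   end) by [].
move: H; rewrite E H1; case: ifP => // _ Hu.
have := f_equal size Hu => /=; lia.
Qed.

Lemma red_nth k (l0 : letter k) (w : word k) : reduce w = w ->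
  forall j, j.+1 < size w -> nth l0 w j.+1 != linv (nth l0 w j).
Proof.
elim: w => [|l u IH] //= Hr [|j] /=.
  case: u Hr IH => [|l' u] //= Hr _ _; exact: red_adj Hr.
move=> Hj; apply: IH; [exact: red_tail Hr | lia].
Qed.

Section PathAction.
Variable k : nat.
Variable l0 : letter k.
Variable w : word k.
Hypothesis wred : reduce w = w.
Local Notation L := (size w).

Definition edge (i : 'I_k) (a b : nat) : bool :=
  [exists j : 'I_L, ((nth l0 w j == (i, false)) && (a == j) && (b == j.+1))
                 || ((nth l0 w j == (i, true)) && (a == j.+1) && (b == j))].


Lemma adj_contra (i : 'I_k) j : j.+1 < L ->
  ~ ((nth l0 w j == (i, false)) && (nth l0 w j.+1 == (i, true))) /\
  ~ ((nth l0 w j == (i, true)) && (nth l0 w j.+1 == (i, false))).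
Proof.
move=> Hj; have Hn := red_nth l0 wred Hj.
by split; case/andP => /eqP E1 /eqP E2; move: Hn; rewrite E1 E2 /linv /= eqxx.
Qed.

Lemma edge_fun i a b b' : edge i a b -> edge i a b' -> b = b'.
Proof.
move=> /existsP [j Hj] /existsP [j' Hj'].
have lj := ltn_ord j; have lj' := ltn_ord j'.
case/orP: Hj => /andP [/andP [Hl /eqP Ha] /eqP Hb];
case/orP: Hj' => /andP [/andP [Hl' /eqP Ha'] /eqP Hb']; try lia.
- exfalso. have Ej : (j : nat) = j'.+1 by lia.
  have [_ C] := adj_contra i (j := j') ltac:(lia).
  by apply: C; rewrite Hl' -Ej Hl.
- exfalso. have Ej : (j' : nat) = j.+1 by lia.
  have [_ C] := adj_contra i (j := j) ltac:(lia).
  by apply: C; rewrite Hl -Ej Hl'.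
Qed.

Lemma edge_inj i a a' b : edge i a b -> edge i a' b -> a = a'.
Proof.
move=> /existsP [j Hj] /existsP [j' Hj'].
have lj := ltn_ord j; have lj' := ltn_ord j'.
case/orP: Hj => /andP [/andP [Hl /eqP Ha] /eqP Hb];
case/orP: Hj' => /andP [/andP [Hl' /eqP Ha'] /eqP Hb']; try lia.
- exfalso. have Ej : (j' : nat) = j.+1 by lia.
  have [C _] := adj_contra i (j := j) ltac:(lia).
  by apply: C; rewrite Hl -Ej Hl'.
- exfalso. have Ej : (j : nat) = j'.+1 by lia.
  have [C _] := adj_contra i (j := j') ltac:(lia).
  by apply: C; rewrite Hl' -Ej Hl.
Qed.

Local Notation V := ('I_L.+1 * bool)%type.

Definition fnext i (a : 'I_L.+1) := [pick b : 'I_L.+1 | edge i a b].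
Definition fprev i (b : 'I_L.+1) := [pick a : 'I_L.+1 | edge i a b].

Definition gfun i (v : V) : V :=
  match v with
  | (a, false) => if fnext i a is Some b then (b, false) else (a, true)
  | (a, true) => if fprev i a is Some b then (b, true) else (a, false)
  end.
Definition hfun i (v : V) : V :=
  match v with
  | (a, false) => if fprev i a is Some b then (b, false) else (a, true)
  | (a, true) => if fnext i a is Some b then (b, true) else (a, false)
  end.

Lemma ghK i : cancel (gfun i) (hfun i).
Proof.
case=> a [] /=.
- rewrite /fprev; case: pickP => [b Hb|Hn] /=.
    rewrite /fnext; case: pickP => [c Hc|Hn2] /=.
      by congr (_, _); apply/val_inj/(edge_fun Hc Hb).
    by have := Hn2 a; rewrite Hb.
  by rewrite /fprev; case: pickP => [c Hc|] //=; have := Hn c; rewrite Hc.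
- rewrite /fnext; case: pickP => [b Hb|Hn] /=.
    rewrite /fprev; case: pickP => [c Hc|Hn2] /=.
      by congr (_, _); apply/val_inj/(edge_inj Hc Hb).
    by have := Hn2 a; rewrite Hb.
  by rewrite /fnext; case: pickP => [c Hc|] //=; have := Hn c; rewrite Hc.
Qed.

Definition sigma (i : 'I_k) : {perm V} := perm (can_inj (ghK i)).

Lemma sigma_edge i (a b : 'I_L.+1) : edge i a b -> sigma i (a, false) = (b, false).
Proof.
move=> Hab; rewrite permE /= /fnext; case: pickP => [c Hc|Hn].
  by congr (_, _); apply/val_inj/(edge_fun Hc Hab).
by have := Hn b; rewrite Hab.
Qed.

Lemma step j : j < L ->
  lperm sigma (nth l0 w j) (inord j, false) = (inord j.+1, false).
Proof.
move=> Hj; rewrite /lperm.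
case E: (nth l0 w j) => [i b]; case: b E => E /=.
- have Hs : sigma i (inord j.+1, false) = (inord j, false).
    apply: sigma_edge.
    apply/existsP; exists (Ordinal Hj) => /=; rewrite E eqxx /=.
    by rewrite !inordK //; try lia; rewrite ?eqxx ?orbT.
  by rewrite -Hs permK.
- apply: sigma_edge; apply/existsP; exists (Ordinal Hj) => /=; rewrite E eqxx /=.
  by rewrite !inordK //; try lia; rewrite ?eqxx ?orbT.
Qed.

Lemma traj m : forall j, j + m = L ->
  Defs.hom sigma (drop j w) (inord j, false) = (inord L, false).
Proof.
elim: m => [|m IH] j Hj.
  by rewrite addn0 in Hj; subst; rewrite drop_size /hom /= perm1.
rewrite (drop_nth l0); last lia.
rewrite /= permM step; last lia.
apply: IH; lia.
Qed.

Lemma sigma_nontriv : 0 < L -> Defs.hom sigma w != 1%g.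
Proof.
move=> HL; apply/eqP => H.
have := traj (j := 0) (m := L) erefl; rewrite drop0 H perm1.
case=> /(congr1 (@nat_of_ord _)); rewrite !inordK //; lia.
Qed.

Lemma card_V : #|{: V}| = (L.+1 * 2)%N.
Proof. by rewrite card_prod card_ord card_bool. Qed.

End PathAction.

Section Lift.
Variables P Q : finType.
Definition liftf (p : {perm P}) (o : P + Q) : P + Q :=
  match o with inl x => inl (p x) | inr y => inr y end.
Lemma liftf_inj p : injective (liftf p).
Proof. by case=> [x|y] [x'|y'] //= [] // /perm_inj ->. Qed.
Definition liftp p : {perm P + Q} := perm (@liftf_inj p).

Lemma liftp1 : liftp 1%g = 1%g.
Proof. by apply/permP => -[x|y]; rewrite permE /= !perm1. Qed.
Lemma liftpM a b : liftp (a * b)%g = (liftp a * liftp b)%g.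
Proof. by apply/permP => -[x|y]; rewrite permM !permE /= ?permM. Qed.
Lemma liftpV a : liftp a^-1%g = (liftp a)^-1%g.
Proof. by apply: (mulIg (liftp a)); rewrite -liftpM !mulVg liftp1. Qed.

Lemma hom_lift k (s : 'I_k -> {perm P}) r :
  Defs.hom (fun i => liftp (s i)) r = liftp (Defs.hom s r).
Proof.
elim: r => [|l r IH] /=; first by rewrite liftp1.
rewrite /Defs.hom /= -/(Defs.hom _ r) -/(Defs.hom _ r) IH liftpM /lperm.
by case: l.2; rewrite ?liftpV.
Qed.

Lemma liftp_eq1 p : liftp p = 1%g -> p = 1%g.
Proof.
move=> H; apply/permP => x; have := congr1 (fun f : {perm P + Q} => f (inl x)) H.
by rewrite permE perm1 /= => -[->]; rewrite perm1.
Qed.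

Lemma supp_lift p : #|[set o | liftp p o != (1%g : {perm P + Q}) o]| <= #|P|.
Proof.
have Hs : [set o | liftp p o != (1%g : {perm P + Q}) o] \subset [set inl x | x in [set: P]].
  apply/fintype.subsetP => -[x|y]; rewrite inE permE perm1 /= => H.
    by apply: imset_f; rewrite inE.
  by rewrite eqxx in H.
apply: (leq_trans (subset_leq_card Hs)).
by apply: (leq_trans (leq_imset_card _ _)); rewrite cardsT.
Qed.
End Lift.

Section Core.
Variable R : realType.
Local Open Scope ring_scope.

Lemma dist_small (O : finType) (a b : {perm O}) (x : R) :
  (0 < #|O|)%N -> #|O|%:R <= x -> Defs.dist R a b < x^-1 -> a = b.
Proof.
move=> HO Hx Hd; apply/permP => o; apply/eqP; apply: contraLR Hd => Hne.
rewrite -leNgt /Defs.dist.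
have HO' : (0 : R) < #|O|%:R by rewrite ltr0n.
have Hc : (1 <= #|[set o0 | a o0 != b o0]|)%N.
  by rewrite card_gt0; apply/set0Pn; exists o; rewrite inE.
apply: (le_trans (y := #|O|%:R^-1)).
  rewrite lef_pV2 ?posrE //; lra.
rewrite ler_pdivlMr // mulVf ?ler1n //; lra.
Qed.

Variables (k : nat) (G : Grp) (pi : word k -> G).

Lemma forced (O : finType) (x delta : R) E (s : 'I_k -> {perm O}) :
  (0 < #|O|)%N -> #|O|%:R <= x -> good_pair pi x^-1 delta E ->
  almost_solution delta E s -> is_solution pi s.
Proof.
move=> HO Hx [_ [_ H]] Has; have [t [Ht Hc]] := H O s Has.
have -> : s = t; last exact: Ht.
by apply: funext => i; apply: (dist_small HO Hx (Hc i)).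
Qed.

Lemma core (P Q : finType) (sg : 'I_k -> {perm P}) (x delta : R) E r0 :
  inker pi r0 -> Defs.hom sg r0 != 1%g -> (0 < #|P| + #|Q|)%N ->
  (#|P| + #|Q|)%:R <= x -> 0 < delta -> good_pair pi x^-1 delta E ->
  delta <= #|P|%:R / (#|P| + #|Q|)%:R /\
  exists2 r, r \in E & Defs.hom sg r != 1%g.
Proof.
move=> Hr0 Hn0 HN Hx Hd Hg.
pose s := fun i => liftp Q (sg i).
have nonsol : ~ is_solution pi s.
  move=> Hs; have := Hs r0 Hr0; rewrite hom_lift => /liftp_eq1 H1.
  by rewrite H1 eqxx in Hn0.
have HO : (0 < #|{: P + Q}|)%N by rewrite card_sum.
have HOx : #|{: P + Q}|%:R <= x by rewrite card_sum.
split.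
  rewrite leNgt; apply/negP => Hlt; apply: nonsol; apply: (forced HO HOx Hg).
  move=> r _; rewrite /Defs.dist hom_lift card_sum.
  apply: le_lt_trans Hlt; rewrite ler_pM2r ?invr_gt0 ?ltr0n // ler_nat.
  exact: supp_lift.
case: (boolP (has (fun r => Defs.hom sg r != 1%g) E)) => [/hasP [r Hr Hn]|/hasPn Hall].
  by exists r.
exfalso; apply: nonsol; apply: (forced HO HOx Hg).
move=> r Hr; have := Hall r Hr; rewrite negbK => /eqP H1.
rewrite /Defs.dist hom_lift H1 liftp1.
suff -> : #|[set o | (1%g : {perm P + Q}) o != (1%g : {perm P + Q}) o]| = 0%N.
  by rewrite mul0r.
by apply/eqP; rewrite cards_eq0; apply/eqP/setP => o; rewrite !inE eqxx.
Qed.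
End Core.

Lemma exists_action k (w : word k) : reduce w = w -> (0 < size w)%N ->
  exists (P : finType) (sg : 'I_k -> {perm P}),
    Defs.hom sg w != 1%g /\ (#|P| <= 3 * size w)%N /\ (0 < #|P|)%N.
Proof.
move=> Hr Hs; case: w Hr Hs => [|l0 u] // Hr _.
case: u Hr => [|l1 u] Hr.
  pose ng : {perm bool} := perm (inv_inj negbK).
  exists (bool : finType), (fun i => if i == l0.1 then ng else 1%g).
  split; last by rewrite card_bool.
  apply/eqP => H; have := congr1 (fun f : {perm bool} => f true) H.
  rewrite /Defs.hom /= permM perm1 perm1 /lperm eqxx.
  case: l0.2.
    move=> H2; have := permKV ng true; rewrite H2 permE /=. by [].
  by rewrite permE.
exists ('I_(size [:: l0, l1 & u]).+1 * bool)%type, (sigma l0 Hr).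
split; first exact: sigma_nontriv.
rewrite card_V /=; lia.
Qed.

Lemma normE_ge k (E : seq (word k)) r : r \in E -> (wlen r <= normE E)%N.
Proof.
elim: E => [|a E IH] //; rewrite inE /normE big_cons -/(normE E).
case/orP => [/eqP ->|/IH]; lia.
Qed.
Unset Implicit Arguments. Set Strict Implicit.
Local Open Scope ring_scope.

Theorem proposition2p3 (R : realType) (k : nat) (G : Grp) (pi : word k -> G) :
  epimorphism pi ->
  @stable R k G pi ->
  (exists r, inker pi r /\ r != [::]) ->
  exists C1 C2 : R, 0 < C1 /\ 0 < C2 /\
    forall x : R, C1 <= x ->
      (forall delta : R, 0 < delta ->
         (exists E, good_pair pi x^-1 delta E) -> delta <= C2 * x^-1) /\
      ((x / 4)%:E <= stab_fun pi x)%E.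
Proof.
move=> _ _ [r0 [Hr0 Hne0]].
pose Pn := fun n => `[< exists r, inker pi r /\ r != [::] /\ size r = n >].
have exP : exists n, Pn n by exists (size r0); apply/asboolP; exists r0.
have [L HL Hmin] := find_ex_minn exP.
move/asboolP: HL => [w [Hw [Hwne Hsz]]].
have Hwred : reduce w = w by case: Hw => /eqP.
have Hwpos : (0 < size w)%N by case: w Hwne {Hw Hwred Hsz}.
have [P [sg [Hsg [HcP HP0]]]] := exists_action Hwred Hwpos.
set m := #|P| in HcP HP0.
exists (m + 4)%:R, (2 * m)%:R.
split; first by rewrite ltr0n; lia.
split; first by rewrite ltr0n; lia.
move=> x Hx.
have x0 : 0 <= x by apply: le_trans Hx; rewrite ler0n.
set n := Num.trunc x.
have Hn1 : n%:R <= x by rewrite truncn_le.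
have Hn2 : x < n.+1%:R by apply: truncnS_gt.
have Hmn : (m + 3 < n)%N.
  have := le_lt_trans Hx Hn2; rewrite ltr_nat; lia.
pose Q := 'I_(n - m).
have HcQ : (m + #|{: Q}| = n)%N by rewrite card_ord; lia.
have Hcore := fun delta E Hd Hg =>
  @core R k G pi P Q sg x delta E w Hw Hsg ltac:(rewrite HcQ; lia)
    ltac:(rewrite HcQ; exact: Hn1) Hd Hg.
rewrite HcQ in Hcore.
have nR0 : 4 <= (n%:R : R) by rewrite (ler_nat R 4 n); lia.
have mR0 : 1 <= (m%:R : R) by rewrite ler1n.
have mn : (m%:R : R) + 3 <= n%:R by rewrite -(natrD R m 3) ler_nat; lia.
split.
  move=> delta Hd [E Hg]; have [H1 _] := Hcore delta E Hd Hg.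
  apply: (le_trans H1).
  clear -Hn1 Hn2 nR0 mR0 mn x0.
  rewrite -natr1 in Hn2.
  have n0 : 0 < (n%:R : R) by lra.
  have x1 : 0 < x by lra.
  rewrite ler_pdivrMr // mulrAC ler_pdivlMr //.
  have -> : (2 * m)%:R * n%:R = m%:R * (2 * n%:R) :> R by rewrite natrM; ring.
  by apply: ler_wpM2l; lra.
apply/ereal_infP => y [delta [E [[/andP [Hd0 Hd1] Hg] ->]]].
rewrite lee_fin.
have [H1 [r Hr Hnr]] := Hcore delta E Hd0 Hg.
have Hrk : inker pi r by case: Hg => _ [Hin _]; exact: Hin.
have Hrne : r != [::] by apply: contra Hnr => /eqP ->.
have HLr : (L <= size r)%N by apply: Hmin; apply/asboolP; exists r.
have HNr := normE_ge Hr.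
have HN : (3 * (normE E)%:R : R) >= m%:R.
  rewrite -(natrM R 3) ler_nat; rewrite /wlen in HNr.
  rewrite Hsz in HcP; apply: (leq_trans HcP); rewrite leq_mul2l /=; exact: leq_trans HLr HNr.
have Hdn : delta * n%:R <= m%:R.
  by move: H1; rewrite ler_pdivlMr //; lra.
rewrite ler_pdivlMr //.
have -> : x / 4 * delta = (x * delta) / 4 by ring.
have h1 : x * delta <= n%:R * delta + delta.
  have : x * delta <= (n%:R + 1) * delta.
    by apply: ler_wpM2r; [lra | rewrite -natr1 in Hn2; lra].
  by rewrite mulrDl mul1r.
have h2 : 3 * delta <= n%:R * delta by apply: ler_wpM2r; lra.
rewrite mulrC in Hdn.
clear -h1 h2 Hdn HN.
move: (x * delta) (n%:R * delta) h1 h2 Hdn => A B h1 h2 Hdn.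
lra.
Qed.
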